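(* The class of graphs isomorphic to $KB(G)$ for some $K_3$-free graph $G$ is a proper subclass of the class of graphs isomorphic to $H^2$ for some graph $H$. (In particular, the square of the net graph is not isomorphic to $KB(G)$ for any $K_3$-free graph $G$.)
   Context: All graphs are finite and simple. A biclique of a graph $G$ is a set $P\subseteq V(G)$ such that the induced subgraph $G[P]$ is a complete bipartite graph with both parts nonempty, and $P$ is inclusion-maximal with this property. The biclique graph $KB(G)$ has the set of bicliques of $G$ as vertex set, two distinct bicliques being adjacent iff they intersect. For a graph $H$, the square $H^2$ has vertex set $V(H)$, two distinct vertices being adjacent iff their distance in $H$ is at most $2$. The net is the graph on six vertices $x_1,x_2,x_3,s_1,s_2,s_3$ whose edges are $x_1x_2,x_2x_3,x_1x_3,x_1s_1,x_2s_2,x_3s_3$. *)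

(* Defs.v *)
From mathcomp Require Import all_boot.
Set Implicit Arguments. Unset Strict Implicit. Unset Printing Implicit Defensive.

Definition simple_graph (T : finType) (e : rel T) : Prop :=
  symmetric e /\ irreflexive e.

Definition K3_free (T : finType) (e : rel T) : Prop :=
  forall x y z : T, e x y -> e y z -> e x z -> False.

Definition is_cbip (T : finType) (e : rel T) (P : {set T}) : bool :=
  [exists X : {set T}, exists Y : {set T},
     [&& X != set0, Y != set0, [disjoint X & Y], X :|: Y == P &
         [forall x in P, forall y in P,
            e x y == ((x \in X) && (y \in Y) || (x \in Y) && (y \in X))]]].

Definition is_biclique (T : finType) (e : rel T) (P : {set T}) : bool :=
  is_cbip e P && [forall Q : {set T}, (P \subset Q) && is_cbip e Q ==> (Q == P)].

Definition KBv (T : finType) (e : rel T) : finType :=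
  {P : {set T} | is_biclique e P}.

Definition KB_rel (T : finType) (e : rel T) : rel (KBv e) :=
  fun A B => (val A != val B) && ~~ [disjoint val A & val B].

Arguments KB_rel {T} e.

Definition sq (U : finType) (h : rel U) : rel U :=
  fun x y => (x != y) && (h x y || [exists z, h x z && h z y]).

Definition isomorphic (T1 T2 : finType) (e1 : rel T1) (e2 : rel T2) : Prop :=
  exists f : T1 -> T2, bijective f /\ forall x y, e2 (f x) (f y) = e1 x y.

(* the net: vertices 0,1,2 = x1,x2,x3 ; 3,4,5 = s1,s2,s3 *)
Definition net_edges : seq (nat * nat) :=
  [:: (0, 1); (1, 2); (0, 2); (0, 3); (1, 4); (2, 5)]%N.

Definition net_rel : rel 'I_6 :=
  fun i j => has (fun p : nat * nat =>
                    ((p.1 == i) && (p.2 == j)) || ((p.1 == j) && (p.2 == i)))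
                 net_edges.

(* Main.v *)
Require Import Defs.
From mathcomp Require Import all_boot zify.
Set Implicit Arguments. Unset Strict Implicit. Unset Printing Implicit Defensive.


Section G.
Variables (T : finType) (e : rel T).
Hypothesis He : simple_graph e.
Hypothesis Hk : K3_free e.
Let symE : symmetric e := He.1.
Let irrE : irreflexive e := He.2.

Lemma ndisjP (A B : {set T}) : reflect (exists x, x \in A /\ x \in B) (~~ [disjoint A & B]).
Proof.
rewrite disjoints_subset; apply: (iffP subsetPn) => [[x xA]|[x [xA xB]]].
  by rewrite inE negbK => xB; exists x.
by exists x; rewrite // inE negbK.
Qed.

Lemma cbipP (P : {set T}) : is_cbip e P ->
  (exists x y, [/\ x \in P, y \in P & e x y]) /\
  (forall x y z, x \in P -> y \in P -> z \in P -> ~~ e x y -> ~~ e y z -> ~~ e x z).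
Proof.
case/existsP=> X /existsP [Y /and5P [nX nY dXY /eqP UP H]].
have H' : forall x y, x \in P -> y \in P ->
   e x y = ((x \in X) && (y \in Y) || (x \in Y) && (y \in X)).
  by move=> x y xP yP; move/forall_inP: H => /(_ x xP) /forall_inP /(_ y yP) /eqP.
have mY : forall x, x \in P -> (x \in Y) = ~~ (x \in X).
  move=> x; rewrite -UP inE; case xX: (x \in X) => /=; last by move=> ->.
  by move=> _; apply/negP => xY; by rewrite (disjointFr dXY xX) in xY.
split.
  case/set0Pn: nX => x xX; case/set0Pn: nY => y yY.
  have xP : x \in P by rewrite -UP inE xX.
  have yP : y \in P by rewrite -UP inE yY orbT.
  by exists x, y; split => //; rewrite H' // xX yY.
move=> x y z xP yP zP; rewrite !H' // !mY //.
by case: (x \in X); case: (y \in X); case: (z \in X).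
Qed.

Lemma cbip_intro (P : {set T}) a b : a \in P -> b \in P -> e a b ->
  (forall x y z, x \in P -> y \in P -> z \in P -> ~~ e x y -> ~~ e y z -> ~~ e x z) ->
  is_cbip e P.
Proof.
move=> aP bP ab tr.
apply/existsP; exists [set x in P | ~~ e a x]; apply/existsP; exists [set x in P | e a x].
apply/and5P; split.
- by apply/set0Pn; exists a; rewrite inE aP irrE.
- by apply/set0Pn; exists b; rewrite inE bP ab.
- by rewrite disjoints_subset; apply/subsetP => x; rewrite !inE => /andP[-> ->].
- by apply/eqP/setP => x; rewrite !inE; case: (x \in P); case: (e a x).
apply/forall_inP => x xP; apply/forall_inP => y yP; rewrite !inE xP yP /=.
case ax: (e a x); case ay: (e a y) => /=.
- by apply/eqP/negbTE/negP => xy; apply: (Hk ax xy ay).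
- case exy: (e x y) => //=.
  by have := tr a y x aP yP xP; rewrite ay (symE y x) exy ax => /(_ isT isT).
- case exy: (e x y) => //=.
  by have := tr a x y aP xP yP; rewrite ax exy ay => /(_ isT isT).
- rewrite eqbF_neg. by apply: (tr x a y xP aP yP); rewrite ?(symE x a) ?ax ?ay.
Qed.

Lemma bicl_max (P Q : {set T}) : is_biclique e P -> is_cbip e Q -> P \subset Q -> Q = P.
Proof. by case/andP=> _ /forallP /(_ Q) + cQ PQ; rewrite PQ cQ /= => /eqP. Qed.

Lemma bicl_ext (S : {set T}) : is_cbip e S -> exists P, is_biclique e P /\ S \subset P.
Proof.
suff: forall n (S : {set T}), #|T| - #|S| < n -> is_cbip e S -> exists P, is_biclique e P /\ S \subset P.
  by move/(_ (#|T| - #|S|).+1 S (ltnSn _)).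
elim=> [//|n IH] {}S Hn cS.
case bS: (is_biclique e S); first by exists S; split.
move: bS; rewrite /is_biclique cS /= => /forallPn [Q].
rewrite negb_imply => /andP [/andP [SQ cQ] QS].
have pSQ : S \proper Q by rewrite properEneq eq_sym QS SQ.
have c1 := proper_card pSQ.
have c2 : #|Q| <= #|T| by apply: max_card.
have [P [bP QP]] := IH Q ltac:(lia) cQ.
by exists P; split => //; apply: subset_trans QP.
Qed.

Definition Nb v := [set u | e v u].

Lemma cbip_nb (P : {set T}) x : is_cbip e P -> x \in P -> exists y, y \in P /\ e x y.
Proof.
case/cbipP=> [[a [b [aP bP ab]]] tr] xP.
case xa: (e x a); first by exists a.
case xb: (e x b); first by exists b.
have := tr a x b aP xP bP; rewrite (symE a x) xa xb ab => /(_ isT isT) //.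
Qed.

Lemma cbip_tr' (P : {set T}) x y z : is_cbip e P -> x \in P -> y \in P -> z \in P ->
  e x y -> ~~ e x z -> e y z.
Proof.
case/cbipP=> _ tr xP yP zP xy nxz; apply/negPn/negP => nyz.
have := tr x z y xP zP yP nxz; rewrite (symE z y) => /(_ nyz); by rewrite xy.
Qed.

Lemma star_ex v u : e v u -> exists B : KBv e, v \in val B /\ Nb v \subset val B.
Proof.
move=> vu.
have cS : is_cbip e (v |: Nb v).
  apply: (cbip_intro (a := v) (b := u)); rewrite ?inE ?eqxx ?vu ?orbT //.
  move=> x y z; rewrite !inE.
  move=> /predU1P[->|vx] /predU1P[->|vy] /predU1P[->|vz];
   [by rewrite irrE|by move=> _ ->|by rewrite vy|by rewrite vy|by rewrite symE vx
   |by rewrite symE vx|by rewrite (symE y v) vy|].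
  move=> _ _; apply/negP => xz; exact: (Hk vx xz vz).
have [P [bP SP]] := bicl_ext cS.
exists (exist _ P bP) => /=; split.
  by apply: (subsetP SP); rewrite !inE eqxx.
by apply: subset_trans SP; apply: subsetUr.
Qed.

Lemma Ext (P : KBv e) x a : x \in val P ->
  (forall z, z \in val P -> e x z -> e a z) -> a \in val P.
Proof.
move=> xP H.
have bP := valP P.
have cP : is_cbip e (val P) by case/andP: bP.
have key : forall p, p \in val P -> e a p = e x p.
  move=> p pP; case xp: (e x p); first by apply: H.
  apply/negP => ap.
  have [z [zP xz]] := cbip_nb cP xP.
  have pz : e z p by apply: (cbip_tr' cP xP zP pP xz); rewrite xp.
  by apply: (Hk ap); [rewrite symE; exact: pz | apply: H].
pose phi u := if u == a then x else u.
have phiP : forall u, u \in a |: val P -> phi u \in val P.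
  by move=> u; rewrite /phi !inE; case: (u =P a) => [_ _|_ /= uP].
have phiE : forall u w, u \in a |: val P -> w \in a |: val P -> e u w = e (phi u) (phi w).
  move=> u w; rewrite /phi !inE; case: (u =P a) => [->|nua]; case: (w =P a) => [->|nwa] //=.
  - by rewrite !irrE.
  - by move=> _ wP; apply: key.
  - by move=> uP _; rewrite symE key // symE.
have cQ : is_cbip e (a |: val P).
  case/cbipP: cP => [[x0 [y0 [x0P y0P xy0]]] tr].
  apply: (cbip_intro (a := x0) (b := y0)); rewrite ?inE ?x0P ?y0P ?orbT //.
  move=> u w t uQ wQ tQ; rewrite (phiE u w) // (phiE w t) // (phiE u t) //; apply: tr; exact: phiP.
have := bicl_max bP cQ (subsetUr _ _) => <-.
by rewrite !inE eqxx.
Qed.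

Lemma cbipK (P : KBv e) : is_cbip e (val P).
Proof. by case/andP: (valP P). Qed.

Lemma star_uniq (B C : KBv e) v : v \in val B -> Nb v \subset val B ->
  v \in val C -> Nb v \subset val C -> B = C.
Proof.
move=> vB sB vC sC; apply: val_inj.
have BC : val B \subset val C.
  apply/subsetP => p pB; case vp: (e v p).
    by apply: (subsetP sC); rewrite inE.
  apply: (Ext vC) => z zC vz.
  have zB : z \in val B by apply: (subsetP sB); rewrite inE.
  by rewrite symE; apply: (cbip_tr' (cbipK B) vB zB pB vz); rewrite vp.
by symmetry; exact: (bicl_max (valP B) (cbipK C) BC).
Qed.

Definition hK : rel (KBv e) := fun A C => (val A != val C) &&
  [exists v, [&& v \in val A, v \in val C & (Nb v \subset val A) || (Nb v \subset val C)]].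

Lemma hK_sym : symmetric hK.
Proof.
move=> A C; rewrite /hK eq_sym; congr (_ && _); apply/existsP/existsP => -[v];
  by rewrite andbCA orbC; exists v.
Qed.

Lemma hK_irr : irreflexive hK.
Proof. by move=> A; rewrite /hK eqxx. Qed.

Lemma hK_inter (A C : KBv e) : hK A C -> exists v, v \in val A /\ v \in val C.
Proof. by case/andP=> _ /existsP [v /and3P [vA vC _]]; exists v. Qed.

Lemma hK_intro (A C : KBv e) v : val A != val C -> v \in val A -> v \in val C ->
  Nb v \subset val A -> hK A C.
Proof. by move=> nAC vA vC sA; rewrite /hK nAC; apply/existsP; exists v; rewrite vA vC sA. Qed.

Lemma inNb v u : (u \in Nb v) = e v u.
Proof. by rewrite inE. Qed.

Lemma hK2 (A B C : KBv e) : hK A B -> hK B C -> exists x, x \in val A /\ x \in val C.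
Proof.
move=> /andP[nAB /existsP[v /and3P[vA vB sv]]] /andP[nBC /existsP[w /and3P[wB wC sw]]].
have cbA := cbipK A; have cB := cbipK B; have cbC := cbipK C.
case: (v =P w) => [vw|nvw]; first by exists v; rewrite {2}vw.
case/orP: sv => sv; case/orP: sw => sw.
-
  case vw: (e v w).
    by exists w; split => //; apply: (subsetP sv); rewrite inNb.
  have [c [cC wc]] := cbip_nb cbC wC.
  have cB' : c \in val B by apply: (subsetP sw); rewrite inNb.
  have cv : e c v by apply: (cbip_tr' cB wB cB' vB wc); rewrite symE vw.
  by exists c; split => //; apply: (subsetP sv); rewrite inNb symE.
-
  case vw: (e v w).
    by exists w; split => //; apply: (subsetP sv); rewrite inNb.
  have [u [uB vu]] := cbip_nb cB vB.
  have uw : e u w by apply: (cbip_tr' cB vB uB wB vu); rewrite vw.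
  exists u; split; first by apply: (subsetP sv); rewrite inNb.
  by apply: (subsetP sw); rewrite inNb symE.
-
  have [a [aA va]] := cbip_nb cbA vA.
  have aB : a \in val B by apply: (subsetP sv); rewrite inNb.
  case vw: (e v w).
    exists a; split => //; apply: (Ext wC) => z zC wz.
    have zB : z \in val B by apply: (subsetP sw); rewrite inNb.
    have nwa : ~~ e w a by apply/negP => wa; apply: (Hk vw wa va).
    by rewrite symE; apply: (cbip_tr' cB wB zB aB wz nwa).
  exists w; split => //; apply: (Ext vA) => z zA vz.
  have zB : z \in val B by apply: (subsetP sv); rewrite inNb.
  by rewrite symE; apply: (cbip_tr' cB vB zB wB vz); rewrite vw.
-
  case vw: (e v w).
    by exists v; split => //; apply: (subsetP sw); rewrite inNb symE.
  have [a [aA va]] := cbip_nb cbA vA.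
  have aB : a \in val B by apply: (subsetP sv); rewrite inNb.
  have aw : e a w by apply: (cbip_tr' cB vB aB wB va); rewrite vw.
  by exists a; split => //; apply: (subsetP sw); rewrite inNb symE.
Qed.

Lemma inter_sq (A C : KBv e) v : val A != val C -> v \in val A -> v \in val C ->
  hK A C \/ exists B, hK A B /\ hK B C.
Proof.
move=> nAC vA vC.
have [u [_ vu]] := cbip_nb (cbipK A) vA.
have [M [vM sM]] := star_ex vu.
case: (val M =P val A) => [MA|nMA].
  by left; apply: (hK_intro nAC vA vC); rewrite -MA.
case: (val M =P val C) => [MC|nMC].
  by left; rewrite hK_sym; apply: (hK_intro _ vC vA); [rewrite eq_sym | rewrite -MC].
right; exists M; split.
  by rewrite hK_sym; apply: (hK_intro _ vM vA) => //; apply/eqP.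
by apply: (hK_intro _ vM vC) => //; apply/eqP.
Qed.

Lemma sq_hK (A C : KBv e) : sq hK A C = KB_rel e A C.
Proof.
rewrite /sq /KB_rel -val_eqE.
case nAC: (val A != val C) => //=; apply/idP/idP.
  case/orP=> [/hK_inter | /existsP [B /andP [h1 h2]]].
    by case=> x [xA xC]; apply/ndisjP; exists x.
  by case: (hK2 h1 h2) => x [xA xC]; apply/ndisjP; exists x.
case/ndisjP => v [vA vC]; case: (inter_sq nAC vA vC) => [->//|[B [h1 h2]]].
by apply/orP; right; apply/existsP; exists B; rewrite h1 h2.
Qed.

End G.

Lemma ex6 (P : pred 'I_6) : [exists z, P z] =
  [|| P (@Ordinal 6 0 isT), P (@Ordinal 6 1 isT), P (@Ordinal 6 2 isT), P (@Ordinal 6 3 isT), P (@Ordinal 6 4 isT) | P (@Ordinal 6 5 isT)].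
Proof.
apply/existsP/idP => [[z Pz]|].
  move: Pz; case: z => -[|[|[|[|[|[|i]]]]]] Hi //= Pz;
  by rewrite (bool_irrelevance Hi isT) in Pz; rewrite Pz ?orbT.
by case/or4P => [|||/or3P[||]] Pz; eexists; exact Pz.
Qed.
Lemma sqnet : [forall i : 'I_6, forall j : 'I_6, sq net_rel i j == (i != j) && ~~((3 <= i) && (3 <= j))].
Proof. apply/forallP => -[[|[|[|[|[|[|i]]]]]] Hi] //; apply/forallP => -[[|[|[|[|[|[|j]]]]]] Hj] //;
 rewrite /sq ex6; vm_compute; reflexivity. Qed.

Lemma sqnet' (i j : 'I_6) : sq net_rel i j = (i != j) && ~~((2 < i) && (2 < j)).
Proof. by move/forallP: sqnet => /(_ i) /forallP /(_ j) /eqP. Qed.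

Section P2.
Variables (T : finType) (e : rel T).
Hypothesis He : simple_graph e.
Hypothesis Hk : K3_free e.
Let symE : symmetric e := He.1.
Let irrE : irreflexive e := He.2.
Variables (f : KBv e -> 'I_6) (g : 'I_6 -> KBv e).
Hypotheses (fK : cancel f g) (gK : cancel g f).
Hypothesis iso : forall x y, sq net_rel (f x) (f y) = KB_rel e x y.

Definition isS (B : KBv e) := 2 < f B.

Lemma KBE (A B : KBv e) : KB_rel e A B = (A != B) && ~~ [disjoint val A & val B].
Proof. by rewrite /KB_rel val_eqE. Qed.

Lemma fneq (A B : KBv e) : (f A != f B) = (A != B).
Proof. by rewrite (inj_eq (can_inj fK)). Qed.

Lemma DD (A B : KBv e) : isS A -> isS B -> A != B -> forall x, x \in val A -> x \in val B -> False.
Proof.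
move=> sA sB nAB x xA xB.
have := iso A B; rewrite sqnet' KBE fneq nAB /= /isS in sA sB *; rewrite sA sB /=.
by move/esym/negbFE/ndisjP; apply; exists x.
Qed.

Lemma II (A B : KBv e) : A != B -> ~~ (isS A && isS B) -> exists x, x \in val A /\ x \in val B.
Proof.
move=> nAB nS.
have := iso A B; rewrite sqnet' KBE fneq nAB /=.
by rewrite /isS in nS; rewrite nS => /esym /ndisjP.
Qed.

Lemma Conf (A C X : KBv e) : isS A -> isS C -> A != C -> hK A X -> hK C X -> False.
Proof.
move=> sA sC nAC hA hC; rewrite hK_sym in hC.
have [x [xA xC]] := hK2 He Hk hA hC.
exact: (DD sA sC nAC xA xC).
Qed.

Lemma starM (S : KBv e) a : a \in val S -> exists M : KBv e, a \in val M /\ Nb e a \subset val M.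
Proof.
move=> aS; have [u [_ au]] := cbip_nb He (cbipK S) aS.
exact: (star_ex He Hk au).
Qed.

Lemma hnbX (S M : KBv e) v : isS S -> v \in val S -> v \in val M -> Nb e v \subset val M ->
  ~~ (Nb e v \subset val S) -> ~~ isS M /\ hK S M.
Proof.
move=> sS vS vM sM nsS.
have nMS : val M != val S by apply/eqP => MS; rewrite -MS sM in nsS.
split.
  apply/negP => sMM; apply: (DD sS sMM _ vS vM).
  by rewrite -val_eqE eq_sym.
by rewrite hK_sym; apply: (hK_intro nMS vM vS sM).
Qed.

Definition o0 : 'I_6 := @Ordinal 6 0 isT.
Definition o1 : 'I_6 := @Ordinal 6 1 isT.
Definition o3 : 'I_6 := @Ordinal 6 3 isT.
Definition o4 : 'I_6 := @Ordinal 6 4 isT.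
Definition o5 : 'I_6 := @Ordinal 6 5 isT.

Lemma gneq (t : 'I_6) (S : KBv e) : t != f S -> g t != S.
Proof. by move=> h; rewrite -fneq gK. Qed.

Lemma isSg (t : 'I_6) : isS (g t) = (2 < t).
Proof. by rewrite /isS gK. Qed.

Lemma hnb (S : KBv e) : isS S -> exists X, ~~ isS X /\ hK S X.
Proof.
move=> sS.
have nX0 : ~~ isS (g o0) by rewrite isSg.
have nSX : S != g o0 by rewrite eq_sym gneq //; apply/negP => /eqP h; rewrite /isS -h in sS.
have [v [vS vX]] := II nSX ltac:(by rewrite negb_and nX0 orbT).
case sv: (Nb e v \subset val S).
  exists (g o0); split => //.
  by apply: (hK_intro _ vS vX sv); rewrite val_eqE.
have [M [vM sM]] := starM vS.
by exists M; apply: (hnbX sS vS vM sM); rewrite sv.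
Qed.

Lemma uniq_aux (S S1 S2 X Y : KBv e) : isS S -> isS S1 -> isS S2 -> S1 != S2 -> S1 != S -> S2 != S ->
  ~~ isS X -> ~~ isS Y -> hK S X -> hK S Y -> X = Y.
Proof.
move=> sS s1 s2 n12 n1 n2 nX nY hX hY.
have [X1 [nX1 h1]] := hnb s1.
have [X2 [nX2 h2]] := hnb s2.
have d : forall Z Z' S', isS S' -> S' != S -> hK S Z -> hK S' Z' -> nat_of_ord (f Z) <> f Z'.
  move=> Z Z' S' sS' nS' hZ hZ' /val_inj /(can_inj fK) eZ.
  by rewrite eZ in hZ; apply: (Conf sS' sS nS' hZ' hZ).
have d12 : nat_of_ord (f X1) <> f X2.
  move=> /val_inj /(can_inj fK) eZ; rewrite eZ in h1.
  exact: (Conf s1 s2 n12 h1 h2).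
have a1 := d _ _ _ s1 n1 hX h1; have a2 := d _ _ _ s2 n2 hX h2.
have b1 := d _ _ _ s1 n1 hY h1; have b2 := d _ _ _ s2 n2 hY h2.
move: nX nY nX1 nX2; rewrite /isS -!leqNgt => lX lY lX1 lX2.
apply: (can_inj fK); apply: val_inj => /=; lia.
Qed.

Lemma uniqHN (S X Y : KBv e) : isS S -> ~~ isS X -> ~~ isS Y -> hK S X -> hK S Y -> X = Y.
Proof.
move=> sS nX nY hX hY.
have : (nat_of_ord (f S) = 3) \/ (nat_of_ord (f S) = 4) \/ (nat_of_ord (f S) = 5).
  move: sS (ltn_ord (f S)); rewrite /isS; lia.
have ne : forall t : 'I_6, nat_of_ord t <> f S -> g t != S.
  by move=> t h; apply: gneq; apply/eqP => /(congr1 val).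
case=> [h|[h|h]].
- apply: (@uniq_aux S (g o4) (g o5)) => //; rewrite ?isSg ?ne ?h //.
  by rewrite -fneq !gK.
- apply: (@uniq_aux S (g o3) (g o5)) => //; rewrite ?isSg ?ne ?h //.
  by rewrite -fneq !gK.
- apply: (@uniq_aux S (g o3) (g o4)) => //; rewrite ?isSg ?ne ?h //.
  by rewrite -fneq !gK.
Qed.


Lemma C1 (S Ma : KBv e) a : isS S -> a \in val S -> a \in val Ma -> Nb e a \subset val Ma ->
  ~~ (Nb e a \subset val S) ->
  exists u, [/\ u \in val S, e a u & Nb e u \subset val S].
Proof.
move=> sS aS aM sM nsS.
case: (boolP [exists u, [&& u \in val S, e a u & Nb e u \subset val S]]).
  by case/existsP => u /and3P [h1 h2 h3]; exists u.
move/existsPn => H; exfalso.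
have [u0 [u0S au0]] := cbip_nb He (cbipK S) aS.
have nsu : ~~ (Nb e u0 \subset val S) by have := H u0; rewrite u0S au0.
have [M0 [u0M sM0]] := starM u0S.
have [nM0 h0] := hnbX sS u0S u0M sM0 nsu.
have [nMa ha] := hnbX sS aS aM sM nsS.
have eM := uniqHN sS nM0 nMa h0 ha; subst M0.
have SM : val S \subset val Ma.
  apply/subsetP => z zS; case az: (e a z).
    by apply: (subsetP sM); rewrite inE.
  have u0z : e u0 z by apply: (cbip_tr' He (cbipK S) aS u0S zS au0); rewrite az.
  by apply: (subsetP sM0); rewrite inE.
have := bicl_max (valP S) (cbipK Ma) SM => eMS.
by rewrite -eMS sM in nsS.
Qed.

Lemma LL (Sa Sb Ma Mb : KBv e) a b : isS Sa -> isS Sb -> Sa != Sb ->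
  a \in val Sa -> a \in val Ma -> Nb e a \subset val Ma -> ~~ (Nb e a \subset val Sa) ->
  b \in val Sb -> b \in val Mb -> Nb e b \subset val Mb -> ~~ (Nb e b \subset val Sb) ->
  b \in val Ma -> e a b.
Proof.
move=> sa sb nab aS aM saM nsa bS bM sbM nsb bMa.
apply/negPn/negP => nab'.
have [u [uS au suS]] := C1 sa aS aM saM nsa.
have uM : u \in val Ma by apply: (subsetP saM); rewrite inE.
have ub : e u b by apply: (cbip_tr' He (cbipK Ma) aM uM bMa au).
have uMb : u \in val Mb by apply: (subsetP sbM); rewrite inE symE.
have [_ hb] := hnbX sb bS bM sbM nsb.
have nSM : val Sa != val Mb.
  apply/negP => /eqP eSM; rewrite -eSM in bM; exact: (DD sa sb nab bM bS).
have ha : hK Sa Mb by apply: (hK_intro nSM uS uMb suS).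
exact: (Conf sa sb nab ha hb).
Qed.

Lemma goodY (S1 S2 Y : KBv e) : isS S1 -> isS S2 -> S1 != S2 -> ~~ isS Y -> hK S1 Y ->
  exists q, [/\ q \in val S2, q \in val Y & ~~ (Nb e q \subset val S2)].
Proof.
move=> s1 s2 n12 nY h1.
have nSY : S2 != Y by apply/negP => /eqP eSY; rewrite -eSY s2 in nY.
have [q [qS qY]] := II nSY ltac:(by rewrite negb_and nY orbT).
exists q; split => //; apply/negP => sq2.
have h2 : hK S2 Y by apply: (hK_intro _ qS qY sq2); rewrite val_eqE.
exact: (Conf s1 s2 n12 h1 h2).
Qed.

Lemma mainP (S1 S2 S3 : KBv e) p : isS S1 -> isS S2 -> isS S3 ->
  S1 != S2 -> S1 != S3 -> S2 != S3 ->
  p \in val S1 -> ~~ (Nb e p \subset val S1) -> False.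
Proof.
move=> s1 s2 s3 n12 n13 n23 pS nsp.
have [Y [pY sY]] := starM pS.
have [nY hY] := hnbX s1 pS pY sY nsp.
have [q [qS qY nsq]] := goodY s1 s2 n12 nY hY.
have [Z [qZ sZ]] := starM qS.
have [nZ hZ] := hnbX s2 qS qZ sZ nsq.
have pq : e p q := LL s1 s2 n12 pS pY sY nsp qS qZ sZ nsq qY.
have [r [rS rY nsr]] := goodY s1 s3 n13 nY hY.
have [W [rW sW]] := starM rS.
have [nW hW] := hnbX s3 rS rW sW nsr.
have pr : e p r := LL s1 s3 n13 pS pY sY nsp rS rW sW nsr rY.
have [r' [r'S r'Z nsr']] := goodY s2 s3 n23 nZ hZ.
have [V [r'V sV]] := starM r'S.
have [nV hV] := hnbX s3 r'S r'V sV nsr'.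
have qr' : e q r' := LL s2 s3 n23 qS qZ sZ nsq r'S r'V sV nsr' r'Z.
have qV : q \in val V by apply: (subsetP sV); rewrite inE symE.
have eVW := uniqHN s3 nV nW hV hW; subst V.
have n32 : S3 != S2 by rewrite eq_sym.
have rq : e r q := LL s3 s2 n32 rS rW sW nsr qS qZ sZ nsq qV.
by apply: (Hk pq _ pr); rewrite symE.
Qed.

Lemma part2 : False.
Proof.
have s3 : isS (g o3) by rewrite isSg.
have s4 : isS (g o4) by rewrite isSg.
have s5 : isS (g o5) by rewrite isSg.
have n34 : g o3 != g o4 by rewrite -fneq !gK.
have n35 : g o3 != g o5 by rewrite -fneq !gK.
have n45 : g o4 != g o5 by rewrite -fneq !gK.
have [X [nX hX]] := hnb s3.
pose X' := if f X == o0 then g o1 else g o0.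
have nX' : ~~ isS X' by rewrite /X'; case: ifP; rewrite isSg.
have nXX' : X != X'.
  rewrite /X'; case: ifP => h; rewrite -fneq gK ?h //.
  by move/eqP: h => ->.
have nSX' : g o3 != X' by apply/negP => /eqP h; rewrite h in s3; rewrite s3 in nX'.
have [v [vS vX']] := II nSX' ltac:(by rewrite negb_and nX' orbT).
case sv: (Nb e v \subset val (g o3)).
  have h : hK (g o3) X' by apply: (hK_intro _ vS vX' sv); rewrite val_eqE.
  by have := uniqHN s3 nX nX' hX h; move/eqP; rewrite (negbTE nXX').
by apply: (mainP s3 s4 s5 n34 n35 n45 vS); rewrite sv.
Qed.

End P2.

Theorem corollary2 :
  (forall (T : finType) (e : rel T), simple_graph e -> K3_free e ->
     exists (U : finType) (h : rel U), simple_graph h /\ isomorphic (KB_rel e) (sq h))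
  /\
  (forall (T : finType) (e : rel T), simple_graph e -> K3_free e ->
     ~ isomorphic (KB_rel e) (sq net_rel)).
Proof.
split.
  move=> T e He Hk; exists (KBv e), (hK (e := e)); split.
    by split; [exact: hK_sym | exact: hK_irr].
  exists id; split; first by exists id.
  by move=> x y; rewrite sq_hK.
move=> T e He Hk [f [[g fK gK] iso]].
exact: (part2 He Hk fK gK iso).
Qed.
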